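(* Let $G^{\mathcal X}_r=(V_r,E^{\mathcal X}_r,s_r)$ be an extraction order. An edge $e\in E^{\mathcal X}_r$ is labeled with $j\in V_r$ (i.e., $j\in\mathcal L_e$) if and only if there exists a node $i\in V_r$ such that (i) $e$ lies on a directed path from $i$ to $j$ in $E^{\mathcal X}_r$, i.e., $e\in E_{i\leadsto j}$, and (ii) a confluence from $i$ to $j$ exists.
   Context: An extraction order of a directed graph $G_r=(V_r,E_r)$ is a rooted directed acyclic graph $G^{\mathcal X}_r=(V_r,E^{\mathcal X}_r,s_r)$ in which every node is reachable from $s_r$ and $E^{\mathcal X}_r$ is obtained from $E_r$ by reversing some (possibly no) edges. A confluence from $i$ to $j$ is a pair of directed paths in $E^{\mathcal X}_r$ from $i$ to $j$ sharing no node other than $i$ and $j$; it contains the edges of both paths. For $e\in E^{\mathcal X}_r$, $\mathcal L_e$ is the set of nodes $j$ such that $e$ belongs to some confluence with target $j$. $E_{i\leadsto j}$ denotes the set of edges of $E^{\mathcal X}_r$ that lie on some directed path from $i$ to $j$. *)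

(* Defs.v *)
From mathcomp Require Import all_boot.
Set Implicit Arguments. Unset Strict Implicit. Unset Printing Implicit Defensive.

(* The original graph G_r = (V, E) is given by edges e : E with tail [srcr e]
   and head [tgtr e].  The extraction order E^X reverses the edges e with
   [rev e = true]. *)
Definition xsrc (V E : Type) (srcr tgtr : E -> V) (rev : E -> bool) (e : E) : V :=
  if rev e then tgtr e else srcr e.
Definition xtgt (V E : Type) (srcr tgtr : E -> V) (rev : E -> bool) (e : E) : V :=
  if rev e then srcr e else tgtr e.

Section Digraph.
Variables (V E : finType) (src tgt : E -> V).

Fixpoint is_walk (x : V) (p : seq E) (y : V) : bool :=
  if p is e :: p' then (src e == x) && is_walk (tgt e) p' y else x == y.

Definition is_dpath (x : V) (p : seq E) (y : V) : bool :=
  is_walk x p y && uniq (x :: map tgt p).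

Definition path_nodes (x : V) (p : seq E) : seq V := x :: map tgt p.

Definition dag_acyclic : Prop := forall x p, is_walk x p x -> p = [::].

Definition rooted_at (s : V) : Prop := forall v : V, exists p, is_walk s p v.

Definition confluence (i j : V) (p1 p2 : seq E) : Prop :=
  [/\ is_dpath i p1 j, is_dpath i p2 j, p1 != p2 &
      forall v, v \in path_nodes i p1 -> v \in path_nodes i p2 -> (v == i) || (v == j)].

Definition labeled_with (e : E) (j : V) : Prop :=
  exists i p1 p2, confluence i j p1 p2 /\ (e \in p1 ++ p2).

Definition on_path_between (e : E) (i j : V) : Prop :=
  exists p, is_dpath i p j /\ e \in p.

End Digraph.

Definition extraction_order (V E : finType) (srcr tgtr : E -> V) (rev : E -> bool)
    (s : V) : Prop :=
  dag_acyclic (xsrc srcr tgtr rev) (xtgt srcr tgtr rev) /\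
  rooted_at (xsrc srcr tgtr rev) (xtgt srcr tgtr rev) s.

(* Main.v *)
Require Import Defs.
From mathcomp Require Import all_boot.
Set Implicit Arguments. Unset Strict Implicit. Unset Printing Implicit Defensive.

Section S.
Variables (V E : finType) (src tgt : E -> V).
Local Notation walk := (is_walk src tgt).

Lemma walk_cat x p z q y : walk x p z -> walk z q y -> walk x (p ++ q) y.
Proof.
elim: p x => [|f p IH] x /=; first by move/eqP->.
by case/andP=> -> /IH H /H.
Qed.

Lemma walk_catI x p q y : walk x (p ++ q) y -> exists z, walk x p z /\ walk z q y.
Proof.
elim: p x => [|f p IH] x /=; first by move=> H; exists x; rewrite eqxx.
by case/andP=> /eqP-> /IH [z [H1 H2]]; exists z; rewrite eqxx H1.
Qed.

Lemma walk_last x p y : walk x p y -> last x (map tgt p) = y.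
Proof.
by elim: p x => [|f p IH] x /=; [move/eqP | case/andP=> _ /IH].
Qed.

Lemma walk_split x p y v : walk x p y -> v \in x :: map tgt p ->
  exists p1 p2, [/\ p = p1 ++ p2, walk x p1 v & walk v p2 y].
Proof.
elim: p x => [|f p IH] x /=.
  move=> /eqP->; rewrite inE => /eqP->; by exists [::], [::]; rewrite /= !eqxx.
case/andP=> /eqP Hs Hw; rewrite inE; case/orP=> [/eqP->|Hv].
  by exists [::], (f::p); rewrite /= Hs eqxx Hw.
case: (IH _ Hw Hv) => p1 [p2 [-> H1 H2]]; exists (f::p1), p2.
by rewrite /= Hs eqxx H1 H2.
Qed.

Lemma last_in (C : pred V) x (p : seq E) : C x -> exists p1 p2,
  [/\ p = p1 ++ p2, C (last x (map tgt p1)) & all (predC C) (map tgt p2)].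
Proof.
move=> Cx; elim/last_ind: p => [|p f IH]; first by exists [::], [::].
case: (boolP (C (tgt f))) => Hf.
  by exists (rcons p f), [::]; rewrite map_rcons last_rcons cats0.
case: IH => p1 [p2 [-> H1 H2]]; exists p1, (rcons p2 f).
by rewrite rcons_cat map_rcons all_rcons /= Hf H2.
Qed.

Lemma first_in (C : pred V) w (p : seq E) : C (last w (map tgt p)) -> exists p1 p2,
  [/\ p = p1 ++ p2, C (last w (map tgt p1)) & all (predC C) (belast w (map tgt p1))].
Proof.
elim: p w => [|f p IH] w /= H; first by exists [::], [::].
case: (boolP (C w)) => Hw; first by exists [::], (f::p).
case: (IH _ H) => p1 [p2 [-> H1 H2]]; exists (f::p1), p2.
by rewrite /= Hw H2.
Qed.

Hypothesis acyc : dag_acyclic src tgt.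

Lemma walk_uniq x p y : walk x p y -> uniq (x :: map tgt p).
Proof.
elim: p x => [|f p IH] x //=.
case/andP=> /eqP Hs Hw; have U := IH _ Hw; rewrite /= in U; rewrite U andbT.
apply/negP => Hx; case: (walk_split Hw Hx) => p1 [p2 [_ H1 _]].
have := @acyc x (f :: p1); rewrite /= Hs eqxx H1 => /(_ isT); done.
Qed.

Lemma walk_dpath x p y : walk x p y -> is_dpath src tgt x p y.
Proof. by move=> H; rewrite /is_dpath H (walk_uniq H). Qed.

Lemma caseA i j q q' a b seg e : walk i q j -> walk i q' j ->
  (forall v, v \in i :: map tgt q -> v \in i :: map tgt q' -> (v == i) || (v == j)) ->
  e \notin q' -> e \in seg -> walk a seg b -> a \in i :: map tgt q -> b \in i :: map tgt q ->
  (forall v, v \in map tgt seg -> v \in i :: map tgt q' -> v = b) ->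
  labeled_with src tgt e j.
Proof.
move=> W W' Hint He' He Ws Ha Hb Hseg.
case: (walk_split W Ha) => qa1 [r1 [Eq1 Wa1 _]].
case: (walk_split W Hb) => r2 [qb2 [Eq2 _ Wb2]].
have WP : walk i (qa1 ++ seg ++ qb2) j by apply: (walk_cat Wa1); apply: (walk_cat Ws).
exists i, (qa1 ++ seg ++ qb2), q'; split; last by rewrite !mem_cat He ?orbT.
split; [exact: walk_dpath | exact: walk_dpath | | ].
  apply/eqP => Eq; move: He'; rewrite -Eq !mem_cat He orbT; done.
move=> v; rewrite /path_nodes !map_cat -cat_cons !mem_cat => /orP [Hv|/orP [Hv|Hv]] Hv'.
- apply: Hint Hv'; by rewrite Eq1 map_cat -cat_cons mem_cat Hv.
- by move: (Hseg v Hv Hv') => Evb; apply: Hint Hv'; rewrite Evb.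
- apply: Hint Hv'; by rewrite Eq2 map_cat -cat_cons mem_cat Hv orbT.
Qed.

Lemma caseB i j q q' a b seg e : walk i q j -> walk i q' j ->
  (forall v, v \in i :: map tgt q -> v \in i :: map tgt q' -> (v == i) || (v == j)) ->
  e \notin q -> e \in seg -> walk a seg b -> a \in i :: map tgt q -> b \in i :: map tgt q' ->
  b \notin i :: map tgt q ->
  (forall v, v \in map tgt seg -> v \in i :: map tgt q -> v = b) ->
  labeled_with src tgt e j.
Proof.
move=> W W' Hint He' He Ws Ha Hb Hbn Hseg.
case: (walk_split W Ha) => qa1 [qa2 [Eq1 Wa1 Wa2]].
case: (walk_split W' Hb) => r2 [qb2 [Eq2 _ Wb2]].
have WP : walk a (seg ++ qb2) j by apply: (walk_cat Ws).
exists a, (seg ++ qb2), qa2; split; last by rewrite !mem_cat He ?orbT.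
split; [exact: walk_dpath | exact: walk_dpath | | ].
  apply/eqP => Eq; move: He'; rewrite Eq1 -Eq !mem_cat He orbT; done.
move=> v; rewrite /path_nodes map_cat inE => Hv1.
case: (v =P a) => [-> _|/eqP Hva]; first by [].
rewrite inE (negbTE Hva) /= => Hv2.
have HvQ : v \in i :: map tgt q by rewrite Eq1 map_cat -cat_cons mem_cat Hv2 orbT.
move: Hv1; rewrite (negbTE Hva) /= mem_cat => /orP [Hv|Hv].
  by move: Hbn; rewrite -(Hseg v Hv HvQ) HvQ.
have HvQ' : v \in i :: map tgt q' by rewrite Eq2 map_cat -cat_cons mem_cat Hv orbT.
case/orP: (Hint v HvQ HvQ') => [/eqP Evi|->]; last by [].
have U := walk_uniq W; rewrite Eq1 map_cat -cat_cons cat_uniq in U.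
case/and3P: U => _ /hasPn /(_ v Hv2) /=; rewrite Evi inE eqxx //.
Qed.

Lemma back i j p q1 q2 e : walk i p j -> e \in p -> confluence src tgt i j q1 q2 ->
  labeled_with src tgt e j.
Proof.
move=> Hp He Hc; case: (Hc) => D1 D2 _ Dint.
case/andP: D1 => W1 _; case/andP: D2 => W2 _.
case: (boolP (e \in q1 ++ q2)) => Heq; first by exists i, q1, q2.
rewrite mem_cat negb_or in Heq; case/andP: Heq => Hn1 Hn2.
pose C : pred V := fun v => (v \in i :: map tgt q1) || (v \in i :: map tgt q2).
move: Hp; case/splitPr: He => pa pb Hp.
case: (walk_catI Hp) => z [Hpa /= /andP [/eqP Hz Hpb]].
have Ci : C i by rewrite /C inE eqxx.
case: (last_in pa Ci) => pa1 [pa2 [Epa Ca Na]].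
have Cj : C (last (tgt e) (map tgt pb)).
  by rewrite (walk_last Hpb) /C -{1}(walk_last W1) mem_last.
case: (first_in Cj) => pb1 [pb2 [Epb Cb Nb]].
rewrite Epa in Hpa; case: (walk_catI Hpa) => a' [Ha1 Ha2].
rewrite Epb in Hpb; case: (walk_catI Hpb) => b' [Hb1 Hb2].
rewrite (walk_last Ha1) in Ca; rewrite (walk_last Hb1) in Cb Nb.
have Ws : walk a' (pa2 ++ e :: pb1) b'.
  by apply: (walk_cat Ha2); rewrite /= Hz eqxx Hb1.
have Hs : e \in pa2 ++ e :: pb1 by rewrite mem_cat inE eqxx orbT.
have Hseg : forall v, v \in map tgt (pa2 ++ e :: pb1) -> C v -> v = b'.
  move=> v; rewrite map_cat mem_cat => /orP [Hv|Hv] Cv.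
    by move: (allP Na v Hv); rewrite /= Cv.
  move: Hv; rewrite /= -(walk_last Hb1) lastI mem_rcons inE.
  case/orP => [/eqP //|Hv]; by move: (allP Nb v Hv); rewrite /= Cv.
have Dint' : forall v, v \in i :: map tgt q2 -> v \in i :: map tgt q1 -> (v == i) || (v == j).
  by move=> v H2 H1; apply: Dint.
case: (boolP ((a' \in i :: map tgt q1) && (b' \in i :: map tgt q1))) => [/andP [A1 B1]|N1].
  apply: (caseA W1 W2 Dint Hn2 Hs Ws A1 B1) => v Hv Hv'.
  by apply: Hseg Hv _; rewrite /C Hv' orbT.
case: (boolP ((a' \in i :: map tgt q2) && (b' \in i :: map tgt q2))) => [/andP [A2 B2]|N2].
  apply: (caseA W2 W1 Dint' Hn1 Hs Ws A2 B2) => v Hv Hv'.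
  by apply: Hseg Hv _; rewrite /C Hv'.
case/orP: Ca => A; case/orP: Cb => B.
- by rewrite A B in N1.
- apply: (caseB W1 W2 Dint Hn1 Hs Ws A B).
    by apply/negP => B1; rewrite A B1 in N1.
  by move=> v Hv Hv'; apply: Hseg Hv _; rewrite /C Hv'.
- apply: (caseB W2 W1 Dint' Hn2 Hs Ws A B).
    by apply/negP => B2; rewrite A B2 in N2.
  by move=> v Hv Hv'; apply: Hseg Hv _; rewrite /C Hv' orbT.
- by rewrite A B in N2.
Qed.

End S.

Theorem lemma13 (V E : finType) (srcr tgtr : E -> V) (rev : E -> bool) (s : V) :
  extraction_order srcr tgtr rev s ->
  forall (e : E) (j : V),
    labeled_with (xsrc srcr tgtr rev) (xtgt srcr tgtr rev) e j <->
    exists i : V,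
      on_path_between (xsrc srcr tgtr rev) (xtgt srcr tgtr rev) e i j /\
      exists p1 p2, confluence (xsrc srcr tgtr rev) (xtgt srcr tgtr rev) i j p1 p2.
Proof.
move=> [acyc _] e j; split.
  move=> [i [p1 [p2 [Hc He]]]]; exists i; split; last by exists p1, p2.
  case: (Hc) => D1 D2 _ _; rewrite mem_cat in He.
  by case/orP: He => He; [exists p1 | exists p2].
move=> [i [[p [Hp He]] [q1 [q2 Hc]]]].
case/andP: Hp => Hw _.
exact: (back acyc Hw He Hc).
Qed.
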